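(* Consider a chemical reaction network satisfying (H1) and (H2) which contains the two connected components \[ Y+S_0\rightleftarrows U_1\to Y+S_1\rightleftarrows\cdots\rightleftarrows U_L\to Y+S_L,\qquad \widetilde Y+S_L\rightleftarrows V_L\to \widetilde Y+S_{L-1}\rightleftarrows\cdots\rightleftarrows V_1\to\widetilde Y+S_0, \] $L\ge1$, with rate constants as in the context. Then all the constants $a_j,b_j,c_j,\tilde a_j,\tilde b_j,\tilde c_j$ ($1\le j\le L$) of these two components are identifiable from $s_L$ using the derivatives $s_L^{(\ell)}$ with $1\le\ell\le\max\{2,2L-1\}$.
   Context: Species are capital letters, concentrations the corresponding lower-case letters. A chemical reaction network is a finite directed graph on complexes (nonnegative integer combinations of species) with reactions $y\to y'$ carrying rate constants $k_{yy'}>0$ (vector $\mathbf{k}$); mass-action system $\dot{\mathbf{x}}=\sum k_{yy'}\mathbf{x}^y(y'-y)$. Total derivative of a polynomial: $\dot\varphi=\sum_i\frac{\partial\varphi}{\partial x_i}\dot x_i$ with $\dot x_i$ replaced by the right-hand side; $\varphi^{(\ell)}$ its $\ell$-th iterate, a polynomial in $\mathbf{x}$ with coefficients polynomial in $\mathbf{k}$. A map $\psi$ of $\mathbf{k}$ is identifiable from variables $x_{i_1},\dots,x_{i_t}$ using orders $1\le\ell\le D$ if equality of all $x_{i_j}^{(\ell)}(\mathbf{x},\mathbf{k}^* )$ and $x_{i_j}^{(\ell)}(\mathbf{x},\mathbf{k}^{**})$ as polynomials in $\mathbf{x}$ ($1\le\ell\le D$, all $j$) implies $\psi(\mathbf{k}^*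 )=\psi(\mathbf{k}^{**})$, for all positive $\mathbf{k}^*,\mathbf{k}^{**}$. Hypotheses. (H1) Every connected component has the form $Y+S_0\rightleftarrows U_1\to\cdots\rightleftarrows U_L\to Y+S_L$ (reactions $Y+S_{j-1}\to U_j$, $U_j\to Y+S_{j-1}$, $U_j\to Y+S_j$) with a unique enzyme $Y$; intermediates distinct throughout the network; non-intermediates of one component pairwise distinct but possibly appearing in other components; each complex lies in a unique component. $\mathscr{S}_U$ = set of substrates/products of the component of intermediate $U$. (H2) A partition $\mathscr{S}^{(0)}\sqcup\cdots\sqcup\mathscr{S}^{(M)}$ ($M\ge2$, nonempty parts, $\mathscr{S}^{(0)}$ the intermediates) of the species such that for each intermediate $U$ with enzyme $Y$ there is $\alpha\ge1$ with $\mathscr{S}_U\subseteq\mathscr{S}^{(\alpha)}$, $Y\notin\mathscr{S}^{(\alpha)}$. Rate constants: first component: $Y+S_{j-1}\to U_j$ rate $a_j$, $U_j\to Y+S_{j-1}$ rate $b_j$, $U_j\to Y+S_j$ rate $c_j$. Second component: $\widetilde Y+S_j\to V_j$ rate $\tilde a_j$, $V_j\to\widetilde Y+S_j$ rate $\tilde b_j$, $V_j\to\widetilde Y+S_{j-1}$ rate $\tilde c_j$ ($1\le j\le L$). *)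

(* Defs.v *)
From Stdlib Require Import Reals List Arith Lia.
Import ListNotations.
Open Scope R_scope.

(** * Polynomial expressions in the concentrations x_0, x_1, ... (species are nats)
    with real coefficients, together with formal partial derivatives. *)
Inductive pexpr : Type :=
| PC : R -> pexpr
| PX : nat -> pexpr
| PAdd : pexpr -> pexpr -> pexpr
| PMul : pexpr -> pexpr -> pexpr.

Fixpoint peval (x : nat -> R) (p : pexpr) : R :=
  match p with
  | PC c => c
  | PX i => x i
  | PAdd p q => peval x p + peval x q
  | PMul p q => peval x p * peval x q
  end.

Fixpoint pderiv (i : nat) (p : pexpr) : pexpr :=
  match p with
  | PC _ => PC 0
  | PX j => PC (if Nat.eqb j i then 1 else 0)
  | PAdd p q => PAdd (pderiv i p) (pderiv i q)
  | PMul p q => PAdd (PMul (pderiv i p) q) (PMul p (pderiv i q))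
  end.

Fixpoint ppow (p : pexpr) (m : nat) : pexpr :=
  match m with
  | O => PC 1
  | S m' => PMul p (ppow p m')
  end.

(** complexes: nonnegative integer combinations of the species 0..n-1 *)
Definition complex := nat -> nat.

Definition monomial (n : nat) (y : complex) : pexpr :=
  fold_right (fun i acc => PMul (ppow (PX i) (y i)) acc) (PC 1) (seq 0 n).

Record reaction := mkReaction { r_src : complex; r_tgt : complex; r_rate : R }.

Definition mass_action (n : nat) (rs : list reaction) (i : nat) : pexpr :=
  fold_right
    (fun r acc => PAdd (PMul (PC (r_rate r * (INR (r_tgt r i) - INR (r_src r i))))
                             (monomial n (r_src r))) acc)
    (PC 0) rs.

Definition total_deriv (n : nat) (F : nat -> pexpr) (phi : pexpr) : pexpr :=
  fold_right (fun i acc => PAdd (PMul (pderiv i phi) (F i)) acc) (PC 0) (seq 0 n).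

(** * Networks satisfying the shape of (H1): a list of components
      Y + S_0 <-> U_1 -> Y + S_1 <-> ... <-> U_L -> Y + S_L. *)
Record chain := mkChain {
  ch_L : nat;
  ch_Y : nat;
  ch_S : nat -> nat;       (* substrates/products S_0, ..., S_L *)
  ch_U : nat -> nat        (* intermediates U_1, ..., U_L *)
}.

Definition dflt_chain : chain := mkChain 0%nat 0%nat (fun _ => 0%nat) (fun _ => 0%nat).
Definition chain_at (N : list chain) (c : nat) : chain := nth c N dflt_chain.

(** rate constants: for component c and step j (1 <= j <= L_c):
    rt_a c j : Y + S_{j-1} -> U_j,  rt_b c j : U_j -> Y + S_{j-1},
    rt_c c j : U_j -> Y + S_j *)
Record rates := mkRates {
  rt_a : nat -> nat -> R;
  rt_b : nat -> nat -> R;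
  rt_c : nat -> nat -> R
}.

Definition cplx1 (a : nat) : complex := fun i => if Nat.eqb i a then 1%nat else 0%nat.
Definition cplx2 (a b : nat) : complex :=
  fun i => ((if Nat.eqb i a then 1%nat else 0%nat) + (if Nat.eqb i b then 1%nat else 0%nat))%nat.

Definition chain_reactions (ch : chain) (c : nat) (k : rates) : list reaction :=
  flat_map (fun j =>
    [ mkReaction (cplx2 (ch_Y ch) (ch_S ch (j - 1))) (cplx1 (ch_U ch j)) (rt_a k c j);
      mkReaction (cplx1 (ch_U ch j)) (cplx2 (ch_Y ch) (ch_S ch (j - 1))) (rt_b k c j);
      mkReaction (cplx1 (ch_U ch j)) (cplx2 (ch_Y ch) (ch_S ch j)) (rt_c k c j) ])
    (seq 1 (ch_L ch)).

Definition network_reactions (N : list chain) (k : rates) : list reaction :=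
  flat_map (fun c => chain_reactions (chain_at N c) c k) (seq 0 (length N)).

Definition deriv_iter (n : nat) (N : list chain) (k : rates) (l : nat) (i : nat) : pexpr :=
  Nat.iter l (total_deriv n (mass_action n (network_reactions N k))) (PX i).

Definition positive_rates (N : list chain) (k : rates) : Prop :=
  forall c j, (c < length N)%nat -> (1 <= j <= ch_L (chain_at N c))%nat ->
    0 < rt_a k c j /\ 0 < rt_b k c j /\ 0 < rt_c k c j.

Definition chain_complexes (ch : chain) : list complex :=
  map (fun j => cplx2 (ch_Y ch) (ch_S ch j)) (seq 0 (S (ch_L ch))) ++
  map (fun j => cplx1 (ch_U ch j)) (seq 1 (ch_L ch)).

Definition is_intermediate (N : list chain) (i : nat) : Prop :=
  exists c j, (c < length N)%nat /\ (1 <= j <= ch_L (chain_at N c))%nat /\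
              ch_U (chain_at N c) j = i.

Definition H1 (n : nat) (N : list chain) : Prop :=
  (forall c, (c < length N)%nat ->
     let ch := chain_at N c in
     (1 <= ch_L ch)%nat /\
     (ch_Y ch < n)%nat /\
     (forall j, (j <= ch_L ch)%nat -> (ch_S ch j < n)%nat) /\
     (forall j, (1 <= j <= ch_L ch)%nat -> (ch_U ch j < n)%nat) /\
     (forall j, (j <= ch_L ch)%nat -> ch_S ch j <> ch_Y ch) /\
     (forall j j', (j <= ch_L ch)%nat -> (j' <= ch_L ch)%nat ->
        ch_S ch j = ch_S ch j' -> j = j')) /\
  (forall c j c' j', (c < length N)%nat -> (1 <= j <= ch_L (chain_at N c))%nat ->
     (c' < length N)%nat -> (1 <= j' <= ch_L (chain_at N c'))%nat ->
     ch_U (chain_at N c) j = ch_U (chain_at N c') j' -> c = c' /\ j = j') /\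
  (forall c j c', (c < length N)%nat -> (1 <= j <= ch_L (chain_at N c))%nat ->
     (c' < length N)%nat ->
     ch_U (chain_at N c) j <> ch_Y (chain_at N c') /\
     (forall j', (j' <= ch_L (chain_at N c'))%nat ->
        ch_U (chain_at N c) j <> ch_S (chain_at N c') j')) /\
  (forall c c', (c < length N)%nat -> (c' < length N)%nat -> c <> c' ->
     forall y y', In y (chain_complexes (chain_at N c)) ->
                  In y' (chain_complexes (chain_at N c')) -> y <> y').

(** Hypothesis (H2): a partition S^(0) ⊔ ... ⊔ S^(M) of the species 0..n-1, given by
    the part index p i, with M >= 2, nonempty parts, S^(0) = the intermediates. *)
Definition H2 (n : nat) (N : list chain) : Prop :=
  exists (M : nat) (p : nat -> nat),
    (2 <= M)%nat /\
    (forall i, (i < n)%nat -> (p i <= M)%nat) /\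
    (forall a, (a <= M)%nat -> exists i, (i < n)%nat /\ p i = a) /\
    (forall i, (i < n)%nat -> (p i = 0%nat <-> is_intermediate N i)) /\
    (forall c j, (c < length N)%nat -> (1 <= j <= ch_L (chain_at N c))%nat ->
       exists a, (1 <= a)%nat /\
         (forall j', (j' <= ch_L (chain_at N c))%nat -> p (ch_S (chain_at N c) j') = a) /\
         p (ch_Y (chain_at N c)) <> a).

Definition identifiable {A : Type} (n : nat) (N : list chain) (psi : rates -> A)
    (vars : list nat) (D : nat) : Prop :=
  forall k1 k2, positive_rates N k1 -> positive_rates N k2 ->
    (forall i, In i vars -> forall l, (1 <= l <= D)%nat ->
       forall x : nat -> R, peval x (deriv_iter n N k1 l i) = peval x (deriv_iter n N k2 l i)) ->
    psi k1 = psi k2.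

Definition two_chain_constants (c1 c2 L : nat) (k : rates) : list (R * R * R * R * R * R) :=
  map (fun j => (rt_a k c1 j, rt_b k c1 j, rt_c k c1 j, rt_a k c2 j, rt_b k c2 j, rt_c k c2 j))
      (seq 1 L).

(* Main.v *)
Require Import Defs.
From Stdlib Require Import Reals List Arith Lia Lra FunctionalExtensionality.
Import ListNotations.
Open Scope R_scope.

Definition lsum {A} (f : A -> R) (l : list A) : R :=
  fold_right (fun a acc => f a + acc) 0 l.

Lemma lsum_app {A} (f : A -> R) l1 l2 : lsum f (l1 ++ l2) = lsum f l1 + lsum f l2.
Proof. induction l1; simpl; [ring| rewrite IHl1; ring]. Qed.

Lemma lsum_flat_map {A B} (f : B -> R) (g : A -> list B) l :
  lsum f (flat_map g l) = lsum (fun a => lsum f (g a)) l.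
Proof. induction l; simpl; [reflexivity| rewrite lsum_app, IHl; reflexivity]. Qed.

Lemma lsum_ext_in {A} (f g : A -> R) l : (forall a, In a l -> f a = g a) -> lsum f l = lsum g l.
Proof. induction l; simpl; intros H; [reflexivity|]. rewrite H, IHl; auto. Qed.

Lemma lsum_plus {A} (f g : A -> R) l : lsum (fun a => f a + g a) l = lsum f l + lsum g l.
Proof. induction l; simpl; [ring| rewrite IHl; ring]. Qed.

Lemma lsum_minus {A} (f g : A -> R) l : lsum (fun a => f a - g a) l = lsum f l - lsum g l.
Proof. induction l; simpl; [ring| rewrite IHl; ring]. Qed.

Lemma lsum_scal {A} c (f : A -> R) l : lsum (fun a => c * f a) l = c * lsum f l.
Proof. induction l; simpl; [ring| rewrite IHl; ring]. Qed.

Lemma lsum_zero {A} (f : A -> R) l : (forall a, In a l -> f a = 0) -> lsum f l = 0.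
Proof. induction l; simpl; intros H; [reflexivity|]. rewrite H, IHl; auto; ring. Qed.

Lemma lsum_swap {A B} (f : A -> B -> R) l1 l2 :
  lsum (fun a => lsum (fun b => f a b) l2) l1 = lsum (fun b => lsum (fun a => f a b) l1) l2.
Proof.
  induction l1; simpl.
  - symmetry; apply lsum_zero; auto.
  - rewrite IHl1, <- lsum_plus. reflexivity.
Qed.

Lemma lsum_single {A} (f : A -> R) l a0 : NoDup l -> In a0 l ->
  (forall a, In a l -> a <> a0 -> f a = 0) -> lsum f l = f a0.
Proof.
  induction l as [|a l IH]; simpl; intros Hnd Hin H; [contradiction|].
  inversion Hnd; subst. destruct Hin as [<-|Hin].
  - rewrite lsum_zero; [ring|]. intros b Hb. apply H; auto. intros ->; contradiction.
  - rewrite H, IH; auto. ring. intros ->; contradiction.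
Qed.

Definition upd (x : nat -> R) j t : nat -> R := fun i => if Nat.eqb i j then t else x i.

Lemma peval_ext x y p : (forall i, x i = y i) -> peval x p = peval y p.
Proof. intros H; induction p; simpl; auto; congruence. Qed.

Lemma pderiv_correct p x j :
  derivable_pt_lim (fun t => peval (upd x j t) p) (x j) (peval x (pderiv j p)).
Proof.
  induction p; simpl.
  - apply derivable_pt_lim_const.
  - unfold upd. destruct (Nat.eqb n j) eqn:E; simpl.
    + apply derivable_pt_lim_id.
    + apply derivable_pt_lim_const.
  - apply (derivable_pt_lim_plus (fun t => peval (upd x j t) p1) (fun t => peval (upd x j t) p2)); auto.
  - assert (Hu : forall q, peval (upd x j (x j)) q = peval x q).
    { intros q; apply peval_ext. intros i; unfold upd. destruct (Nat.eqb i j) eqn:E; auto.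
      apply Nat.eqb_eq in E; subst; auto. }
    pose proof (derivable_pt_lim_mult (fun t => peval (upd x j t) p1) (fun t => peval (upd x j t) p2) _ _ _ IHp1 IHp2) as H.
    simpl in H. rewrite !Hu in H. unfold mult_fct in H. exact H.
Qed.

Lemma pderiv_ext p q : (forall x, peval x p = peval x q) ->
  forall j x, peval x (pderiv j p) = peval x (pderiv j q).
Proof.
  intros H j x.
  pose proof (pderiv_correct p x j) as H1. pose proof (pderiv_correct q x j) as H2.
  assert (E : (fun t => peval (upd x j t) p) = (fun t => peval (upd x j t) q)).
  { apply functional_extensionality; intros; apply H. }
  rewrite E in H1. eapply uniqueness_limite; eauto.
Qed.

Lemma pderiv_comm p j k x :
  peval x (pderiv j (pderiv k p)) = peval x (pderiv k (pderiv j p)).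
Proof.
  revert j k; induction p; intros; simpl; try ring.
  - rewrite IHp1, IHp2. ring.
  - rewrite IHp1, IHp2. ring.
Qed.

Definition lprod (f : nat -> R) (l : list nat) : R := fold_right (fun a acc => f a * acc) 1 l.

Lemma peval_ppow x p m : peval x (ppow p m) = (peval x p) ^ m.
Proof. induction m; simpl; auto. rewrite IHm; ring. Qed.

Lemma peval_monomial_gen x (y : complex) l :
  peval x (fold_right (fun i acc => PMul (ppow (PX i) (y i)) acc) (PC 1) l)
  = lprod (fun i => x i ^ y i) l.
Proof. induction l; simpl; auto. rewrite peval_ppow, IHl. reflexivity. Qed.

Lemma lprod_mult f g l : lprod (fun i => f i * g i) l = lprod f l * lprod g l.
Proof. induction l; simpl; [ring| rewrite IHl; ring]. Qed.

Lemma lprod_one f l : (forall a, In a l -> f a = 1) -> lprod f l = 1.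
Proof. induction l; simpl; intros H; auto. rewrite H, IHl; auto. ring. Qed.

Lemma lprod_single f l a0 : NoDup l -> In a0 l ->
  (forall a, In a l -> a <> a0 -> f a = 1) -> lprod f l = f a0.
Proof.
  induction l as [|a l IH]; simpl; intros Hnd Hin H; [contradiction|].
  inversion Hnd; subst. destruct Hin as [<-|Hin].
  - rewrite lprod_one; [ring|]. intros b Hb. apply H; auto. intros ->; contradiction.
  - rewrite H, IH; auto. ring. intros ->; contradiction.
Qed.

Lemma in_seq0 i n : (i < n)%nat -> In i (seq 0 n).
Proof. intros; apply in_seq; lia. Qed.

Lemma mono1 n u x : (u < n)%nat -> peval x (monomial n (cplx1 u)) = x u.
Proof.
  intros Hu. unfold monomial. rewrite peval_monomial_gen.
  rewrite (lprod_single _ _ u); [| apply seq_NoDup | apply in_seq0; auto |].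
  - unfold cplx1. rewrite Nat.eqb_refl. simpl; ring.
  - intros a _ Ha. unfold cplx1. apply Nat.eqb_neq in Ha. rewrite Ha. simpl. reflexivity.
Qed.

Lemma mono2 n a b x : (a < n)%nat -> (b < n)%nat -> a <> b ->
  peval x (monomial n (cplx2 a b)) = x a * x b.
Proof.
  intros Ha Hb Hab. unfold monomial. rewrite peval_monomial_gen.
  unfold cplx2.
  assert (E : lprod (fun i => x i ^ ((if Nat.eqb i a then 1 else 0) + (if Nat.eqb i b then 1 else 0))%nat) (seq 0 n)
    = lprod (fun i => x i ^ (if Nat.eqb i a then 1 else 0)%nat * x i ^ (if Nat.eqb i b then 1 else 0)%nat) (seq 0 n)).
  { f_equal. apply functional_extensionality; intros; apply pow_add. }
  rewrite E, lprod_mult.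
  rewrite (lprod_single _ _ a), (lprod_single _ _ b); try apply seq_NoDup; try apply in_seq0; auto.
  - rewrite !Nat.eqb_refl. simpl. ring.
  - intros c _ Hc. apply Nat.eqb_neq in Hc. rewrite Hc. reflexivity.
  - intros c _ Hc. apply Nat.eqb_neq in Hc. rewrite Hc. reflexivity.
Qed.

Definition ind (b : bool) : R := if b then 1 else 0.

Definition dm n j src x := peval x (pderiv j (monomial n src)).
Definition ddm n j k src x := peval x (pderiv k (pderiv j (monomial n src))).

Lemma dm1 n j u x : (u < n)%nat -> dm n j (cplx1 u) x = ind (Nat.eqb u j).
Proof.
  intros Hu. unfold dm. rewrite (pderiv_ext _ (PX u)).
  - simpl. reflexivity.
  - intros y; rewrite mono1; auto.
Qed.

Lemma dm2 n j a b x : (a < n)%nat -> (b < n)%nat -> a <> b ->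
  dm n j (cplx2 a b) x = ind (Nat.eqb a j) * x b + x a * ind (Nat.eqb b j).
Proof.
  intros Ha Hb Hab. unfold dm. rewrite (pderiv_ext _ (PMul (PX a) (PX b))).
  - simpl. reflexivity.
  - intros y; rewrite mono2; auto.
Qed.

Lemma ddm1 n j k u x : (u < n)%nat -> ddm n j k (cplx1 u) x = 0.
Proof.
  intros Hu. unfold ddm. rewrite (pderiv_ext _ (pderiv j (PX u))).
  - simpl. reflexivity.
  - apply pderiv_ext. intros y; rewrite mono1; auto.
Qed.

Lemma ddm2 n j k a b x : (a < n)%nat -> (b < n)%nat -> a <> b ->
  ddm n j k (cplx2 a b) x = ind (Nat.eqb a j) * ind (Nat.eqb b k) + ind (Nat.eqb a k) * ind (Nat.eqb b j).
Proof.
  intros Ha Hb Hab. unfold ddm. rewrite (pderiv_ext _ (pderiv j (PMul (PX a) (PX b)))).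
  - simpl. unfold ind. ring.
  - apply pderiv_ext. intros y; rewrite mono2; auto.
Qed.

Definition delta n (r : reaction) (v : nat -> R) : R :=
  lsum (fun i => (INR (r_tgt r i) - INR (r_src r i)) * v i) (seq 0 n).

Lemma sum_cplx1 n u v : (u < n)%nat -> lsum (fun i => INR (cplx1 u i) * v i) (seq 0 n) = v u.
Proof.
  intros Hu. rewrite (lsum_single _ _ u); try apply seq_NoDup; try apply in_seq0; auto.
  - unfold cplx1. rewrite Nat.eqb_refl. simpl. ring.
  - intros a _ Ha. unfold cplx1. apply Nat.eqb_neq in Ha. rewrite Ha. simpl. ring.
Qed.

Lemma sum_cplx2 n a b v : (a < n)%nat -> (b < n)%nat ->
  lsum (fun i => INR (cplx2 a b i) * v i) (seq 0 n) = v a + v b.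
Proof.
  intros Ha Hb. unfold cplx2.
  rewrite (lsum_ext_in _ (fun i => INR (cplx1 a i) * v i + INR (cplx1 b i) * v i)).
  - rewrite lsum_plus, !sum_cplx1; auto.
  - intros i _. unfold cplx1. rewrite plus_INR. ring.
Qed.

Lemma delta_eq n r v : delta n r v =
  lsum (fun i => INR (r_tgt r i) * v i) (seq 0 n) - lsum (fun i => INR (r_src r i) * v i) (seq 0 n).
Proof. unfold delta. rewrite <- lsum_minus. apply lsum_ext_in; intros; ring. Qed.

Lemma peval_mass n rs i x : peval x (mass_action n rs i) =
  lsum (fun r => r_rate r * (INR (r_tgt r i) - INR (r_src r i)) * peval x (monomial n (r_src r))) rs.
Proof. induction rs; simpl; auto. rewrite IHrs; reflexivity. Qed.

Lemma peval_d_mass n rs i j x : peval x (pderiv j (mass_action n rs i)) =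
  lsum (fun r => r_rate r * (INR (r_tgt r i) - INR (r_src r i)) * dm n j (r_src r) x) rs.
Proof. induction rs; simpl; auto. rewrite IHrs; unfold dm; ring. Qed.

Lemma peval_dd_mass n rs i j k x : peval x (pderiv k (pderiv j (mass_action n rs i))) =
  lsum (fun r => r_rate r * (INR (r_tgt r i) - INR (r_src r i)) * ddm n j k (r_src r) x) rs.
Proof. induction rs; simpl; auto. rewrite IHrs; unfold ddm; ring. Qed.

Definition tdl (F : nat -> pexpr) (phi : pexpr) (l : list nat) : pexpr :=
  fold_right (fun i acc => PAdd (PMul (pderiv i phi) (F i)) acc) (PC 0) l.

Lemma peval_d_tdl F phi l j x : peval x (pderiv j (tdl F phi l)) =
  lsum (fun i => peval x (pderiv j (pderiv i phi)) * peval x (F i)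
               + peval x (pderiv i phi) * peval x (pderiv j (F i))) l.
Proof. induction l; simpl; [ring|]. rewrite IHl. ring. Qed.

Lemma peval_dd_tdl F phi l j k x : peval x (pderiv k (pderiv j (tdl F phi l))) =
  lsum (fun i => peval x (pderiv k (pderiv j (pderiv i phi))) * peval x (F i)
               + peval x (pderiv j (pderiv i phi)) * peval x (pderiv k (F i))
               + peval x (pderiv k (pderiv i phi)) * peval x (pderiv j (F i))
               + peval x (pderiv i phi) * peval x (pderiv k (pderiv j (F i)))) l.
Proof. induction l; simpl; [ring|]. rewrite IHl. ring. Qed.

Lemma rec1 n rs phi j x :
  (forall r, In r rs -> peval x (monomial n (r_src r)) = 0) ->
  peval x (pderiv j (total_deriv n (mass_action n rs) phi)) =
  lsum (fun r => r_rate r * dm n j (r_src r) x * delta n r (fun i => peval x (pderiv i phi))) rs.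
Proof.
  intros H0. unfold total_deriv. fold (tdl (mass_action n rs) phi (seq 0 n)).
  rewrite peval_d_tdl.
  rewrite (lsum_ext_in _ (fun i => lsum (fun r => peval x (pderiv i phi) *
      (r_rate r * (INR (r_tgt r i) - INR (r_src r i)) * dm n j (r_src r) x)) rs)).
  2:{ intros i _. rewrite peval_mass, peval_d_mass. rewrite lsum_zero.
      - rewrite <- lsum_scal. ring.
      - intros r Hr. rewrite H0; auto. ring. }
  rewrite lsum_swap. apply lsum_ext_in. intros r _. unfold delta.
  rewrite <- lsum_scal. apply lsum_ext_in. intros; ring.
Qed.

Lemma rec2 n rs phi j k x :
  (forall r, In r rs -> peval x (monomial n (r_src r)) = 0) ->
  peval x (pderiv k (pderiv j (total_deriv n (mass_action n rs) phi))) =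
  lsum (fun r => r_rate r * ddm n j k (r_src r) x * delta n r (fun i => peval x (pderiv i phi))) rs
  + lsum (fun r => r_rate r * dm n k (r_src r) x * delta n r (fun i => peval x (pderiv j (pderiv i phi)))) rs
  + lsum (fun r => r_rate r * dm n j (r_src r) x * delta n r (fun i => peval x (pderiv k (pderiv i phi)))) rs.
Proof.
  intros H0. unfold total_deriv. fold (tdl (mass_action n rs) phi (seq 0 n)).
  rewrite peval_dd_tdl.
  rewrite (lsum_ext_in _ (fun i => lsum (fun r =>
        peval x (pderiv i phi) * (r_rate r * (INR (r_tgt r i) - INR (r_src r i)) * ddm n j k (r_src r) x)
      + peval x (pderiv j (pderiv i phi)) * (r_rate r * (INR (r_tgt r i) - INR (r_src r i)) * dm n k (r_src r) x)
      + peval x (pderiv k (pderiv i phi)) * (r_rate r * (INR (r_tgt r i) - INR (r_src r i)) * dm n j (r_src r) x)) rs)).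
  2:{ intros i _. rewrite peval_mass, !peval_d_mass, peval_dd_mass. rewrite (lsum_zero _ rs).
      - rewrite !lsum_plus, <- !lsum_scal. ring.
      - intros r Hr. rewrite H0; auto. ring. }
  rewrite lsum_swap, <- !lsum_plus. apply lsum_ext_in. intros r _. unfold delta.
  rewrite <- !lsum_scal, <- !lsum_plus. apply lsum_ext_in. intros; ring.
Qed.

Section Net.
Variable n : nat.
Variable N : list chain.
Variable k : rates.

Definition Yc c := ch_Y (chain_at N c).
Definition Sc c := ch_S (chain_at N c).
Definition Uc c := ch_U (chain_at N c).
Definition Lc c := ch_L (chain_at N c).

Definition ra c j := mkReaction (cplx2 (Yc c) (Sc c (j - 1))) (cplx1 (Uc c j)) (rt_a k c j).
Definition rb c j := mkReaction (cplx1 (Uc c j)) (cplx2 (Yc c) (Sc c (j - 1))) (rt_b k c j).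
Definition rc c j := mkReaction (cplx1 (Uc c j)) (cplx2 (Yc c) (Sc c j)) (rt_c k c j).

Lemma net_sum (g : reaction -> R) :
  lsum g (network_reactions N k) =
  lsum (fun c => lsum (fun j => g (ra c j) + g (rb c j) + g (rc c j)) (seq 1 (Lc c))) (seq 0 (length N)).
Proof.
  unfold network_reactions. rewrite lsum_flat_map. apply lsum_ext_in. intros c _.
  unfold chain_reactions. rewrite lsum_flat_map. apply lsum_ext_in. intros j _.
  simpl. unfold ra, rb, rc, Yc, Sc, Uc. ring.
Qed.

Lemma in_net r : In r (network_reactions N k) ->
  exists c j, (c < length N)%nat /\ (1 <= j <= Lc c)%nat /\ (r = ra c j \/ r = rb c j \/ r = rc c j).
Proof.
  unfold network_reactions. intros H. apply in_flat_map in H as [c [Hc H]].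
  apply in_seq in Hc. unfold chain_reactions in H. apply in_flat_map in H as [j [Hj H]].
  apply in_seq in Hj. exists c, j. split; [lia|]. split; [unfold Lc; lia|].
  simpl in H. unfold ra, rb, rc, Yc, Sc, Uc. intuition.
Qed.

Hypothesis HH1 : H1 n N.

Lemma h1c c : (c < length N)%nat ->
  (1 <= Lc c)%nat /\ (Yc c < n)%nat /\ (forall j, (j <= Lc c)%nat -> (Sc c j < n)%nat) /\
  (forall j, (1 <= j <= Lc c)%nat -> (Uc c j < n)%nat) /\
  (forall j, (j <= Lc c)%nat -> Sc c j <> Yc c) /\
  (forall j j', (j <= Lc c)%nat -> (j' <= Lc c)%nat -> Sc c j = Sc c j' -> j = j').
Proof. intros Hc. destruct HH1 as [HA _]. apply HA; auto. Qed.

Lemma h1U c j c' j' : (c < length N)%nat -> (1 <= j <= Lc c)%nat ->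
  (c' < length N)%nat -> (1 <= j' <= Lc c')%nat -> Uc c j = Uc c' j' -> c = c' /\ j = j'.
Proof. intros. destruct HH1 as [_ [HA _]]. apply HA; auto. Qed.

Lemma h1UY c j c' : (c < length N)%nat -> (1 <= j <= Lc c)%nat ->
  (c' < length N)%nat -> Uc c j <> Yc c'.
Proof. intros. destruct HH1 as [_ [_ [HA _]]]. apply (HA c j c'); auto. Qed.

Lemma h1US c j c' j' : (c < length N)%nat -> (1 <= j <= Lc c)%nat ->
  (c' < length N)%nat -> (j' <= Lc c')%nat -> Uc c j <> Sc c' j'.
Proof. intros. destruct HH1 as [_ [_ [HA _]]]. apply (HA c j c'); auto. Qed.

Lemma cplx2_comm a b : cplx2 a b = cplx2 b a.
Proof. apply functional_extensionality. intros i. unfold cplx2. lia. Qed.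

Lemma h1cx c c' j j' : (c < length N)%nat -> (c' < length N)%nat -> c <> c' ->
  (j <= Lc c)%nat -> (j' <= Lc c')%nat -> cplx2 (Yc c) (Sc c j) <> cplx2 (Yc c') (Sc c' j').
Proof.
  intros. destruct HH1 as [_ [_ [_ HA]]]. apply (HA c c'); auto.
  - unfold chain_complexes. apply in_or_app. left. apply in_map_iff. exists j. split; auto.
    apply in_seq. unfold Lc in *. lia.
  - unfold chain_complexes. apply in_or_app. left. apply in_map_iff. exists j'. split; auto.
    apply in_seq. unfold Lc in *. lia.
Qed.

Lemma keyS c c' m j : (c < length N)%nat -> (c' < length N)%nat -> (m <= Lc c)%nat -> (j <= Lc c')%nat ->
  ((Yc c' = Yc c /\ Sc c' j = Sc c m) \/ (Yc c' = Sc c m /\ Sc c' j = Yc c)) -> c' = c /\ j = m.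
Proof.
  intros Hc Hc' Hm Hj H. destruct (Nat.eq_dec c' c) as [->|Hne].
  - destruct (h1c c Hc) as [_ [_ [_ [_ [HSY Hinj]]]]].
    destruct H as [[_ H]|[H _]].
    + split; auto.
    + exfalso. apply (HSY m Hm). auto.
  - exfalso. apply (h1cx c' c j m Hc' Hc Hne Hj Hm).
    destruct H as [[-> ->]|[-> ->]]; auto. apply cplx2_comm.
Qed.

Definition X0 (E : nat) : nat -> R := fun i => if Nat.eqb i E then 1 else 0.

Lemma equil c : (c < length N)%nat -> forall r, In r (network_reactions N k) ->
  peval (X0 (Yc c)) (monomial n (r_src r)) = 0.
Proof.
  intros Hc r Hr. destruct (in_net r Hr) as [c' [j [Hc' [Hj Hr']]]].
  destruct (h1c c' Hc') as [_ [HY [HS [HU [HSY _]]]]].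
  destruct Hr' as [->|[->| ->]]; simpl.
  - rewrite mono2; auto; try (apply HS; lia). 2:{ intros E; apply (HSY (j-1)%nat); [lia|auto]. }
    unfold X0. destruct (Nat.eqb (Yc c') (Yc c)) eqn:E1; destruct (Nat.eqb (Sc c' (j-1)) (Yc c)) eqn:E2.
    all: try ring.
    apply Nat.eqb_eq in E1, E2. exfalso. apply (HSY (j-1)%nat); [lia|congruence].
  - rewrite mono1; auto. unfold X0. destruct (Nat.eqb (Uc c' j) (Yc c)) eqn:E; [|reflexivity].
    apply Nat.eqb_eq in E. exfalso. exact (h1UY c' j c Hc' Hj Hc E).
  - rewrite mono1; auto. unfold X0. destruct (Nat.eqb (Uc c' j) (Yc c)) eqn:E; [|reflexivity].
    apply Nat.eqb_eq in E. exfalso. exact (h1UY c' j c Hc' Hj Hc E).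
Qed.

Definition SD x j v := lsum (fun r => r_rate r * dm n j (r_src r) x * delta n r v) (network_reactions N k).
Definition SDD x j j' (g : reaction -> R) := lsum (fun r => r_rate r * ddm n j j' (r_src r) x * g r) (network_reactions N k).

Lemma delta_a c j v : (c < length N)%nat -> (1 <= j <= Lc c)%nat ->
  delta n (ra c j) v = v (Uc c j) - v (Yc c) - v (Sc c (j-1)).
Proof.
  intros Hc Hj. destruct (h1c c Hc) as [_ [HY [HS [HU _]]]].
  rewrite delta_eq. simpl. rewrite sum_cplx1, sum_cplx2; auto; try apply HS; try lia. ring.
Qed.
Lemma delta_b c j v : (c < length N)%nat -> (1 <= j <= Lc c)%nat ->
  delta n (rb c j) v = v (Yc c) + v (Sc c (j-1)) - v (Uc c j).
Proof.
  intros Hc Hj. destruct (h1c c Hc) as [_ [HY [HS [HU _]]]].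
  rewrite delta_eq. simpl. rewrite sum_cplx1, sum_cplx2; auto; try apply HS; try lia.
Qed.
Lemma delta_c c j v : (c < length N)%nat -> (1 <= j <= Lc c)%nat ->
  delta n (rc c j) v = v (Yc c) + v (Sc c j) - v (Uc c j).
Proof.
  intros Hc Hj. destruct (h1c c Hc) as [_ [HY [HS [HU _]]]].
  rewrite delta_eq. simpl. rewrite sum_cplx1, sum_cplx2; auto; try apply HS; try lia.
Qed.

Lemma dm_a c j x jj : (c < length N)%nat -> (1 <= j <= Lc c)%nat ->
  dm n jj (r_src (ra c j)) x = ind (Nat.eqb (Yc c) jj) * x (Sc c (j-1)) + x (Yc c) * ind (Nat.eqb (Sc c (j-1)) jj).
Proof.
  intros Hc Hj. destruct (h1c c Hc) as [_ [HY [HS [HU [HSY _]]]]]. simpl.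
  apply dm2; auto. apply HS; lia. intros E; apply (HSY (j-1)%nat); [lia|auto].
Qed.
Lemma dm_b c j x jj : (c < length N)%nat -> (1 <= j <= Lc c)%nat ->
  dm n jj (r_src (rb c j)) x = ind (Nat.eqb (Uc c j) jj).
Proof. intros Hc Hj. destruct (h1c c Hc) as [_ [HY [HS [HU _]]]]. simpl. apply dm1; auto. Qed.
Lemma dm_c c j x jj : (c < length N)%nat -> (1 <= j <= Lc c)%nat ->
  dm n jj (r_src (rc c j)) x = ind (Nat.eqb (Uc c j) jj).
Proof. intros Hc Hj. destruct (h1c c Hc) as [_ [HY [HS [HU _]]]]. simpl. apply dm1; auto. Qed.

Lemma ddm_a c j x j1 j2 : (c < length N)%nat -> (1 <= j <= Lc c)%nat ->
  ddm n j1 j2 (r_src (ra c j)) x = ind (Nat.eqb (Yc c) j1) * ind (Nat.eqb (Sc c (j-1)) j2)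
     + ind (Nat.eqb (Yc c) j2) * ind (Nat.eqb (Sc c (j-1)) j1).
Proof.
  intros Hc Hj. destruct (h1c c Hc) as [_ [HY [HS [HU [HSY _]]]]]. simpl.
  apply ddm2; auto. apply HS; lia. intros E; apply (HSY (j-1)%nat); [lia|auto].
Qed.
Lemma ddm_b c j x j1 j2 : (c < length N)%nat -> (1 <= j <= Lc c)%nat ->
  ddm n j1 j2 (r_src (rb c j)) x = 0.
Proof. intros Hc Hj. destruct (h1c c Hc) as [_ [HY [HS [HU _]]]]. simpl. apply ddm1; auto. Qed.
Lemma ddm_c c j x j1 j2 : (c < length N)%nat -> (1 <= j <= Lc c)%nat ->
  ddm n j1 j2 (r_src (rc c j)) x = 0.
Proof. intros Hc Hj. destruct (h1c c Hc) as [_ [HY [HS [HU _]]]]. simpl. apply ddm1; auto. Qed.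


Lemma ind_neq a b : a <> b -> ind (Nat.eqb a b) = 0.
Proof. intros H. apply Nat.eqb_neq in H. rewrite H. reflexivity. Qed.
Lemma ind_eq a : ind (Nat.eqb a a) = 1.
Proof. rewrite Nat.eqb_refl. reflexivity. Qed.
Lemma X0_ind E z : X0 E z = ind (Nat.eqb z E).
Proof. reflexivity. Qed.

Lemma net_single (g : reaction -> R) c0 j0 : (c0 < length N)%nat -> (1 <= j0 <= Lc c0)%nat ->
  (forall c j, (c < length N)%nat -> (1 <= j <= Lc c)%nat -> (c <> c0 \/ j <> j0) ->
     g (ra c j) + g (rb c j) + g (rc c j) = 0) ->
  lsum g (network_reactions N k) = g (ra c0 j0) + g (rb c0 j0) + g (rc c0 j0).
Proof.
  intros Hc Hj H. rewrite net_sum. rewrite (lsum_single _ _ c0).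
  - rewrite (lsum_single _ _ j0); auto.
    + apply seq_NoDup.
    + apply in_seq; lia.
    + intros j Hj' Hne. apply in_seq in Hj'. apply H; auto. lia.
  - apply seq_NoDup.
  - apply in_seq; lia.
  - intros c Hc' Hne. apply in_seq in Hc'. apply lsum_zero. intros j Hj'. apply in_seq in Hj'.
    apply H; auto; lia.
Qed.

Lemma net_zero (g : reaction -> R) :
  (forall c j, (c < length N)%nat -> (1 <= j <= Lc c)%nat -> g (ra c j) + g (rb c j) + g (rc c j) = 0) ->
  lsum g (network_reactions N k) = 0.
Proof.
  intros H. rewrite net_sum. apply lsum_zero. intros c Hc. apply in_seq in Hc.
  apply lsum_zero. intros j Hj. apply in_seq in Hj. apply H; lia.
Qed.

Lemma colU c m x v : (c < length N)%nat -> (1 <= m <= Lc c)%nat ->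
  SD x (Uc c m) v = rt_b k c m * (v (Yc c) + v (Sc c (m-1)) - v (Uc c m))
                  + rt_c k c m * (v (Yc c) + v (Sc c m) - v (Uc c m)).
Proof.
  intros Hc Hm. unfold SD. rewrite (net_single _ c m); auto.
  - rewrite dm_a, dm_b, dm_c, delta_b, delta_c; auto. simpl.
    rewrite (ind_neq (Yc c)), (ind_neq (Sc c (m-1))), ind_eq.
    + ring.
    + intros E; apply (h1US c m c (m-1)%nat); auto; lia.
    + intros E; apply (h1UY c m c); auto.
  - intros c' j Hc' Hj Hne. rewrite dm_a, dm_b, dm_c; auto. simpl.
    rewrite (ind_neq (Yc c')), (ind_neq (Sc c' (j-1))), (ind_neq (Uc c' j)).
    + ring.
    + intros E. destruct (h1U c' j c m) as [-> ->]; auto. lia.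
    + intros E; apply (h1US c m c' (j-1)%nat); auto; lia.
    + intros E; apply (h1UY c m c'); auto.
Qed.

Lemma prod_ind0 a b c d : (a = b -> c = d -> False) -> ind (Nat.eqb a b) * ind (Nat.eqb c d) = 0.
Proof.
  intros H. destruct (Nat.eqb a b) eqn:E1; destruct (Nat.eqb c d) eqn:E2; simpl; try ring.
  apply Nat.eqb_eq in E1, E2. exfalso; auto.
Qed.

Lemma dmS_a c m c' j : (c < length N)%nat -> (m <= Lc c)%nat -> (c' < length N)%nat -> (1 <= j <= Lc c')%nat ->
  dm n (Sc c m) (r_src (ra c' j)) (X0 (Yc c)) = if (Nat.eqb c' c && Nat.eqb j (S m))%bool then 1 else 0.
Proof.
  intros Hc Hm Hc' Hj. rewrite dm_a; auto. rewrite !X0_ind.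
  destruct (h1c c Hc) as [_ [_ [_ [_ [HSY _]]]]].
  destruct (Nat.eq_dec c' c) as [->|Hne]; [destruct (Nat.eq_dec j (S m)) as [->|Hne2]|].
  - replace (S m - 1)%nat with m by lia.
    rewrite (prod_ind0 (Yc c) (Sc c m)). 2:{ intros E _; apply (HSY m Hm); auto. }
    rewrite !Nat.eqb_refl. simpl. ring.
  - rewrite !prod_ind0.
    + rewrite Nat.eqb_refl. apply Nat.eqb_neq in Hne2. rewrite Hne2. simpl. ring.
    + intros E1 E2. destruct (keyS c c m (j-1)) as [_ Hjm]; auto; try lia.
    + intros E1 E2. destruct (keyS c c m (j-1)) as [_ Hjm]; auto; try lia.
  - rewrite !prod_ind0.
    + apply Nat.eqb_neq in Hne. rewrite Hne. simpl. ring.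
    + intros E1 E2. destruct (keyS c c' m (j-1)) as [Hcc _]; auto; try lia.
    + intros E1 E2. destruct (keyS c c' m (j-1)) as [Hcc _]; auto; try lia.
Qed.

Lemma colS c m v : (c < length N)%nat -> (m < Lc c)%nat ->
  SD (X0 (Yc c)) (Sc c m) v = rt_a k c (S m) * (v (Uc c (S m)) - v (Yc c) - v (Sc c m)).
Proof.
  intros Hc Hm. unfold SD. rewrite (net_single _ c (S m)); auto; try lia.
  - rewrite dmS_a, dm_b, dm_c, delta_a; auto; try lia. rewrite !Nat.eqb_refl. simpl.
    rewrite (ind_neq (Uc c (S m))). replace (m - 0)%nat with m by lia. ring.
    intros E; apply (h1US c (S m) c m); auto; lia.
  - intros c' j Hc' Hj Hne. rewrite dmS_a, dm_b, dm_c; auto; try lia.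
    rewrite (ind_neq (Uc c' j)).
    + destruct (Nat.eqb c' c && Nat.eqb j (S m))%bool eqn:E5; [|ring].
      apply Bool.andb_true_iff in E5; destruct E5 as [E5 E6]; apply Nat.eqb_eq in E5, E6. lia.
    + intros E; apply (h1US c' j c m); auto; lia.
Qed.

Lemma colS_L c v : (c < length N)%nat -> SD (X0 (Yc c)) (Sc c (Lc c)) v = 0.
Proof.
  intros Hc. unfold SD. apply net_zero. intros c' j Hc' Hj.
  rewrite dmS_a, dm_b, dm_c; auto.
  rewrite (ind_neq (Uc c' j)).
  + destruct (Nat.eqb c' c && Nat.eqb j (S (Lc c)))%bool eqn:E5; [|ring].
    apply Bool.andb_true_iff in E5; destruct E5 as [E5 E6]; apply Nat.eqb_eq in E5, E6. subst. lia.
  + intros E; apply (h1US c' j c (Lc c)); auto.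
Qed.

Lemma colE c v : (c < length N)%nat -> SD (X0 (Yc c)) (Yc c) v = 0.
Proof.
  intros Hc. unfold SD. apply net_zero. intros c' j Hc' Hj.
  destruct (h1c c' Hc') as [_ [_ [_ [_ [HSY _]]]]].
  rewrite dm_a, dm_b, dm_c; auto. rewrite !X0_ind.
  rewrite (ind_neq (Uc c' j)). 2:{ intros E; apply (h1UY c' j c); auto. }
  destruct (Nat.eqb (Yc c') (Yc c)) eqn:E1; destruct (Nat.eqb (Sc c' (j-1)) (Yc c)) eqn:E2; simpl; try ring.
  apply Nat.eqb_eq in E1, E2. exfalso. apply (HSY (j-1)%nat); [lia|congruence].
Qed.

Lemma pair0 c m x j g : (c < length N)%nat -> (1 <= m <= Lc c)%nat ->
  SDD x (Uc c m) j g = 0 /\ SDD x j (Uc c m) g = 0.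
Proof.
  intros Hc Hm. split; unfold SDD; apply net_zero; intros c' j' Hc' Hj';
  rewrite ddm_a, ddm_b, ddm_c; auto;
  rewrite (ind_neq (Yc c') (Uc c m)), (ind_neq (Sc c' (j'-1)) (Uc c m)); try ring;
  try (intros E; apply (h1US c m c' (j'-1)%nat); auto; lia);
  try (intros E; apply (h1UY c m c'); auto).
Qed.

Lemma pairEE x E g : SDD x E E g = 0.
Proof.
  unfold SDD; apply net_zero; intros c' j' Hc' Hj'.
  destruct (h1c c' Hc') as [_ [_ [_ [_ [HSY _]]]]].
  rewrite ddm_a, ddm_b, ddm_c; auto.
  destruct (Nat.eqb (Yc c') E) eqn:E1; destruct (Nat.eqb (Sc c' (j'-1)) E) eqn:E2; simpl; try ring.
  apply Nat.eqb_eq in E1, E2. exfalso. apply (HSY (j'-1)%nat); [lia|congruence].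
Qed.

Lemma pairSS (p : nat -> nat) x j1 j2 g :
  (forall c i, (c < length N)%nat -> (i <= Lc c)%nat -> p (Sc c i) <> p (Yc c)) ->
  p j1 = p j2 -> SDD x j1 j2 g = 0.
Proof.
  intros Hp Hj. unfold SDD; apply net_zero; intros c' j' Hc' Hj'.
  rewrite ddm_a, ddm_b, ddm_c; auto.
  destruct (Nat.eqb (Yc c') j1) eqn:E1; destruct (Nat.eqb (Sc c' (j'-1)) j2) eqn:E2;
  destruct (Nat.eqb (Yc c') j2) eqn:E3; destruct (Nat.eqb (Sc c' (j'-1)) j1) eqn:E4;
  repeat match goal with H : Nat.eqb _ _ = true |- _ => apply Nat.eqb_eq in H end; simpl; try ring;
  exfalso; apply (Hp c' (j'-1)%nat); auto; try lia; congruence.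
Qed.

Lemma ddmYS_a c m c' j x : (c < length N)%nat -> (m <= Lc c)%nat -> (c' < length N)%nat -> (1 <= j <= Lc c')%nat ->
  ddm n (Yc c) (Sc c m) (r_src (ra c' j)) x = (if (Nat.eqb c' c && Nat.eqb j (S m))%bool then 1 else 0)
  /\ ddm n (Sc c m) (Yc c) (r_src (ra c' j)) x = (if (Nat.eqb c' c && Nat.eqb j (S m))%bool then 1 else 0).
Proof.
  intros Hc Hm Hc' Hj. rewrite !ddm_a; auto.
  destruct (h1c c Hc) as [_ [_ [_ [_ [HSY _]]]]].
  destruct (Nat.eq_dec c' c) as [->|Hne]; [destruct (Nat.eq_dec j (S m)) as [->|Hne2]|].
  - replace (S m - 1)%nat with m by lia.
    rewrite !(prod_ind0 (Yc c) (Sc c m)). 2:{ intros E _; apply (HSY m Hm); auto. }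
    rewrite !Nat.eqb_refl. simpl. split; ring.
  - rewrite !prod_ind0; try (intros E1 E2; destruct (keyS c c m (j-1)) as [_ Hjm]; auto; lia).
    rewrite Nat.eqb_refl. apply Nat.eqb_neq in Hne2. rewrite Hne2. simpl. split; ring.
  - rewrite !prod_ind0; try (intros E1 E2; destruct (keyS c c' m (j-1)) as [Hcc _]; auto; lia).
    apply Nat.eqb_neq in Hne. rewrite Hne. simpl. split; ring.
Qed.

Lemma pairYS c m x g : (c < length N)%nat -> (m < Lc c)%nat ->
  SDD x (Yc c) (Sc c m) g = rt_a k c (S m) * g (ra c (S m)) /\
  SDD x (Sc c m) (Yc c) g = rt_a k c (S m) * g (ra c (S m)).
Proof.
  intros Hc Hm. unfold SDD. split; rewrite (net_single _ c (S m)); auto; try lia;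
  try (rewrite ddm_b, ddm_c; auto; try lia;
       rewrite (proj1 (ddmYS_a c m c (S m) x Hc ltac:(lia) Hc ltac:(lia))) ||
       rewrite (proj2 (ddmYS_a c m c (S m) x Hc ltac:(lia) Hc ltac:(lia)));
       rewrite !Nat.eqb_refl; simpl; ring);
  intros c' j Hc' Hj Hne; rewrite ddm_b, ddm_c; auto;
  first [rewrite (proj1 (ddmYS_a c m c' j x Hc ltac:(lia) Hc' Hj)) | rewrite (proj2 (ddmYS_a c m c' j x Hc ltac:(lia) Hc' Hj))];
  destruct (Nat.eqb c' c && Nat.eqb j (S m))%bool eqn:E5; try ring;
  apply Bool.andb_true_iff in E5; destruct E5 as [E5 E6]; apply Nat.eqb_eq in E5, E6; lia.
Qed.

Lemma pairYS_L c x g : (c < length N)%nat ->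
  SDD x (Yc c) (Sc c (Lc c)) g = 0 /\ SDD x (Sc c (Lc c)) (Yc c) g = 0.
Proof.
  intros Hc. unfold SDD. split; apply net_zero;
  intros c' j Hc' Hj; rewrite ddm_b, ddm_c; auto;
  first [rewrite (proj1 (ddmYS_a c (Lc c) c' j x Hc ltac:(lia) Hc' Hj)) | rewrite (proj2 (ddmYS_a c (Lc c) c' j x Hc ltac:(lia) Hc' Hj))];
  destruct (Nat.eqb c' c && Nat.eqb j (S (Lc c)))%bool eqn:E5; try ring;
  apply Bool.andb_true_iff in E5; destruct E5 as [E5 E6]; apply Nat.eqb_eq in E5, E6; subst; lia.
Qed.

End Net.

Definition D1 n N k l o E j := peval (X0 E) (pderiv j (deriv_iter n N k l o)).
Definition D2 n N k l o E a b := peval (X0 E) (pderiv b (pderiv a (deriv_iter n N k l o))).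

Lemma D1_0 n N k o E j : D1 n N k 0 o E j = ind (Nat.eqb o j).
Proof. reflexivity. Qed.
Lemma D2_0 n N k o E a b : D2 n N k 0 o E a b = 0.
Proof. reflexivity. Qed.
Lemma D2_sym n N k l o E a b : D2 n N k l o E a b = D2 n N k l o E b a.
Proof. unfold D2. apply pderiv_comm. Qed.

Lemma SD_ext n N k x j v w : (forall i, v i = w i) -> SD n N k x j v = SD n N k x j w.
Proof.
  intros H. unfold SD. apply lsum_ext_in. intros r _. unfold delta.
  f_equal. apply lsum_ext_in. intros i _. rewrite H; auto.
Qed.

Lemma SD_zero n N k x j : SD n N k x j (fun _ => 0) = 0.
Proof.
  unfold SD. apply lsum_zero. intros r _. unfold delta. rewrite lsum_zero. ring. intros; ring.
Qed.

Lemma REC1 n N k l o c j : H1 n N -> (c < length N)%nat ->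
  D1 n N k (S l) o (Yc N c) j = SD n N k (X0 (Yc N c)) j (D1 n N k l o (Yc N c)).
Proof.
  intros HH Hc. unfold D1. unfold deriv_iter. simpl. rewrite rec1.
  - reflexivity.
  - apply equil; auto.
Qed.

Lemma REC2 n N k l o c a b : H1 n N -> (c < length N)%nat ->
  D2 n N k (S l) o (Yc N c) a b =
    SDD n N k (X0 (Yc N c)) a b (fun r => delta n r (D1 n N k l o (Yc N c)))
  + SD n N k (X0 (Yc N c)) b (fun i => D2 n N k l o (Yc N c) i a)
  + SD n N k (X0 (Yc N c)) a (fun i => D2 n N k l o (Yc N c) i b).
Proof.
  intros HH Hc. unfold D2, D1. unfold deriv_iter. simpl. rewrite rec2.
  - reflexivity.
  - apply equil; auto.
Qed.

Lemma REC2_1 n N k o c a b : H1 n N -> (c < length N)%nat ->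
  D2 n N k 1 o (Yc N c) a b =
    SDD n N k (X0 (Yc N c)) a b (fun r => delta n r (D1 n N k 0 o (Yc N c))).
Proof.
  intros HH Hc. rewrite REC2; auto.
  rewrite (SD_ext _ _ _ _ b _ (fun _ => 0)), (SD_ext _ _ _ _ a _ (fun _ => 0)), !SD_zero; try ring;
  intros; apply D2_0.
Qed.

#[local] Set Default Proof Using "All".

Section Main.
Variables (n : nat) (N : list chain) (c1 c2 L : nat).
Hypothesis HH1 : H1 n N.
Hypothesis HH2 : H2 n N.
Hypothesis Hc1 : (c1 < length N)%nat.
Hypothesis Hc2 : (c2 < length N)%nat.
Hypothesis Hne : c1 <> c2.
Hypothesis HL : (1 <= L)%nat.
Hypothesis HL1 : Lc N c1 = L.
Hypothesis HL2 : Lc N c2 = L.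
Hypothesis HS2 : forall i, (i <= L)%nat -> Sc N c2 i = Sc N c1 (L - i).

Local Notation Y := (Yc N c1).
Local Notation S := (Sc N c1).
Local Notation U := (Uc N c1).
Local Notation Y2 := (Yc N c2).
Local Notation S2 := (Sc N c2).
Local Notation U2 := (Uc N c2).
Local Notation o := (Sc N c1 L).

Lemma S_inj i j : (i <= L)%nat -> (j <= L)%nat -> S i = S j -> i = j.
Proof. destruct (h1c n N HH1 c1 Hc1) as [_ [_ [_ [_ [_ H]]]]]. intros; apply H; lia. Qed.
Lemma S_Y i : (i <= L)%nat -> S i <> Y.
Proof. destruct (h1c n N HH1 c1 Hc1) as [_ [_ [_ [_ [H _]]]]]. intros; apply H; lia. Qed.
Lemma U_S t i : (1 <= t <= L)%nat -> (i <= L)%nat -> U t <> S i.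
Proof. intros; apply (h1US n N HH1 c1 t c1 i); auto; lia. Qed.
Lemma U_Y t : (1 <= t <= L)%nat -> U t <> Y.
Proof. intros; apply (h1UY n N HH1 c1 t c1); auto; lia. Qed.
Lemma U2_S t i : (1 <= t <= L)%nat -> (i <= L)%nat -> U2 t <> S i.
Proof. intros; apply (h1US n N HH1 c2 t c1 i); auto; lia. Qed.
Lemma Y2_S i : (i <= L)%nat -> Y2 <> S i.
Proof.
  intros Hi. destruct (h1c n N HH1 c2 Hc2) as [_ [_ [_ [_ [H _]]]]].
  intros E. apply (H (L - i)%nat); [lia|]. rewrite HS2 by lia. replace (L - (L - i))%nat with i by lia. auto.
Qed.

Lemma pfact : exists p : nat -> nat,
  (forall c i, (c < length N)%nat -> (i <= Lc N c)%nat -> p (Sc N c i) <> p (Yc N c)) /\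
  (forall i j, (i <= L)%nat -> (j <= L)%nat -> p (S i) = p (S j)).
Proof.
  destruct HH2 as [M [p [_ [_ [_ [_ Hp]]]]]]. exists p. split.
  - intros c i Hc Hi. destruct (h1c n N HH1 c Hc) as [HLc _].
    destruct (Hp c 1%nat Hc) as [a [_ [Ha1 Ha2]]]. unfold Lc in HLc; lia.
    unfold Lc in Hi. unfold Sc, Yc. rewrite Ha1 by lia. auto.
  - intros i j Hi Hj. destruct (Hp c1 1%nat Hc1) as [a [_ [Ha1 Ha2]]]. unfold Lc in HL1; lia.
    unfold Sc. unfold Lc in HL1. rewrite !Ha1 by lia. auto.
Qed.

Section K.
Variable k : rates.
Hypothesis Hpos : positive_rates N k.

Lemma pos1 t : (1 <= t <= L)%nat -> 0 < rt_a k c1 t /\ 0 < rt_b k c1 t /\ 0 < rt_c k c1 t.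
Proof. intros; apply Hpos; auto. unfold Lc in HL1; lia. Qed.
Lemma pos2 t : (1 <= t <= L)%nat -> 0 < rt_a k c2 t /\ 0 < rt_b k c2 t /\ 0 < rt_c k c2 t.
Proof. intros; apply Hpos; auto. unfold Lc in HL2; lia. Qed.

Local Notation d1 l E j := (D1 n N k l o E j).
Local Notation d2 l E a b := (D2 n N k l o E a b).

Lemma P1 l : d1 l Y Y = 0.
Proof.
  induction l.
  - rewrite D1_0. apply ind_neq. apply S_Y; lia.
  - rewrite REC1; auto. apply colE; auto.
Qed.

Lemma P2 l : (forall t, (t <= L)%nat -> (l < 2*(L-t))%nat -> d1 l Y (S t) = 0) /\
             (forall t, (1 <= t <= L)%nat -> (l < 2*(L-t)+1)%nat -> d1 l Y (U t) = 0).
Proof.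
  induction l as [|l [IHS IHU]].
  - split; intros; rewrite D1_0; apply ind_neq.
    + intros E. apply S_inj in E; lia.
    + intros E. symmetry in E. apply (U_S t L); auto.
  - split.
    + intros t Ht Hl. rewrite REC1; auto. rewrite colS; auto; try lia.
      rewrite IHU, P1, IHS; try lia. ring.
    + intros t Ht Hl. rewrite REC1; auto. rewrite colU; auto; try lia.
      rewrite IHU, P1, !IHS; try lia. ring.
Qed.

Lemma Ucol l t : (1 <= t <= L)%nat -> (l < 2*(L-t)+2)%nat ->
  d1 (Datatypes.S l) Y (U t) = rt_b k c1 t * (d1 l Y Y - d1 l Y (U t))
     + rt_c k c1 t * (d1 l Y Y + d1 l Y (S t) - d1 l Y (U t)).
Proof.
  intros Ht Hl. rewrite REC1; auto. rewrite colU; auto; try lia.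
  rewrite (proj1 (P2 l) (t-1)%nat); try lia. ring.
Qed.

Lemma P3 m : (m <= L)%nat -> d1 (2*m) Y (S (L-m)) > 0.
Proof.
  induction m; intros Hm.
  - rewrite D1_0. replace (L - 0)%nat with L by lia. rewrite Nat.eqb_refl. simpl. lra.
  - replace (2 * Datatypes.S m)%nat with (Datatypes.S (Datatypes.S (2*m))) by lia.
    rewrite REC1; auto. replace (L - Datatypes.S m)%nat with (L - m - 1)%nat by lia.
    rewrite colS; auto; try lia. replace (Datatypes.S (L - m - 1)) with (L - m)%nat by lia.
    rewrite Ucol; try lia. rewrite !P1. rewrite (proj1 (P2 _) (L-m-1)%nat); try lia.
    rewrite (proj2 (P2 _) (L-m)%nat); try lia.
    destruct (pos1 (L-m)%nat) as [Ha [Hb Hc]]; try lia.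
    specialize (IHm ltac:(lia)).
    replace (rt_a k c1 (L - m) * (rt_b k c1 (L - m) * (0 - 0) + rt_c k c1 (L - m) * (0 + d1 (2 * m) Y (S (L - m)) - 0) - 0 - 0))
      with (rt_a k c1 (L - m) * rt_c k c1 (L - m) * d1 (2 * m) Y (S (L - m))) by ring.
    apply Rmult_gt_0_compat; [apply Rmult_gt_0_compat|]; lra.
Qed.

Lemma c2col l m : (1 <= m <= L)%nat -> (l < 2*m)%nat ->
  d1 (Datatypes.S l) Y (U2 m) = rt_b k c2 m * (d1 l Y Y2 + d1 l Y (S (L-(m-1))) - d1 l Y (U2 m))
     + rt_c k c2 m * (d1 l Y Y2 - d1 l Y (U2 m)).
Proof.
  intros Hm Hl. rewrite REC1; auto. rewrite colU; auto; try lia.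
  rewrite !HS2 by lia. rewrite (proj1 (P2 l) (L-m)%nat); try lia. ring.
Qed.

Lemma Q1U t a : (1 <= t <= L)%nat -> d2 1 Y (U t) a = 0 /\ d2 1 Y a (U t) = 0.
Proof. intros Ht. rewrite !REC2_1; auto. apply pair0; auto. lia. Qed.

Lemma Q1YY : d2 1 Y Y Y = 0.
Proof. rewrite REC2_1; auto. apply pairEE; auto. Qed.

Lemma Q1SS i j : (i <= L)%nat -> (j <= L)%nat -> d2 1 Y (S i) (S j) = 0.
Proof.
  intros Hi Hj. destruct pfact as [p [Hp1 Hp2]].
  rewrite REC2_1; auto. apply (pairSS _ _ _ HH1 p); auto.
Qed.

Lemma ind_o_S i : (i < L)%nat -> ind (Nat.eqb o (S i)) = 0.
Proof. intros Hi. apply ind_neq. intros E. apply S_inj in E; lia. Qed.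
Lemma ind_o_U t : (1 <= t <= L)%nat -> ind (Nat.eqb o (U t)) = 0.
Proof. intros Ht. apply ind_neq. intros E. apply (U_S t L); auto. Qed.
Lemma ind_o_Y : ind (Nat.eqb o Y) = 0.
Proof. apply ind_neq. apply S_Y. lia. Qed.

Lemma Q1YS i : (i <= L)%nat -> d2 1 Y Y (S i) = 0 /\ d2 1 Y (S i) Y = 0.
Proof.
  intros Hi. rewrite !REC2_1; auto. destruct (Nat.eq_dec i L) as [->|Hne'].
  - assert (E := pairYS_L n N k HH1 c1 (X0 Y) (fun r => delta n r (D1 n N k 0 o Y)) Hc1).
    rewrite HL1 in E. exact E.
  - destruct (pairYS n N k HH1 c1 i (X0 Y) (fun r => delta n r (D1 n N k 0 o Y)) Hc1 ltac:(lia)) as [-> ->].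
    rewrite delta_a; auto; try lia. rewrite !D1_0. rewrite ind_o_U, ind_o_Y; try lia.
    replace (Datatypes.S i - 1)%nat with i by lia. rewrite ind_o_S by lia. split; ring.
Qed.

Lemma Q1U1 t a : (1 <= t <= L)%nat -> d2 1 Y (U t) a = 0.
Proof. intros; apply Q1U; auto. Qed.
Lemma Q1U2 t a : (1 <= t <= L)%nat -> d2 1 Y a (U t) = 0.
Proof. intros; apply Q1U; auto. Qed.
Lemma Q1YS1 i : (i <= L)%nat -> d2 1 Y Y (S i) = 0.
Proof. intros; apply Q1YS; auto. Qed.
Lemma Q1YS2 i : (i <= L)%nat -> d2 1 Y (S i) Y = 0.
Proof. intros; apply Q1YS; auto. Qed.

Ltac z1 := repeat first [ rewrite Q1U1 by lia | rewrite Q1U2 by lia | rewrite Q1YY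
   | rewrite Q1YS1 by lia | rewrite Q1YS2 by lia | rewrite Q1SS by lia ].

Lemma d1_1_UL : d1 1 Y (U L) = rt_c k c1 L.
Proof.
  rewrite Ucol; auto; try lia. rewrite !D1_0. rewrite ind_o_U, ind_o_Y, Nat.eqb_refl by lia. simpl. ring.
Qed.

Lemma d1_1_SL : d1 1 Y (S L) = 0.
Proof.
  rewrite REC1; auto. assert (E := colS_L n N k HH1 c1 (D1 n N k 0 o Y) Hc1).
  rewrite HL1 in E. exact E.
Qed.

Lemma d1_2_UL : d1 2 Y (U L) = - (rt_b k c1 L + rt_c k c1 L) * rt_c k c1 L.
Proof.
  rewrite Ucol; auto; try lia. rewrite P1, d1_1_SL, d1_1_UL. ring.
Qed.

Lemma Q2P : d2 2 Y Y (S (L-1)) = rt_a k c1 L * rt_c k c1 L.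
Proof.
  rewrite REC2; auto.
  destruct (pairYS n N k HH1 c1 (L-1) (X0 Y) (fun r => delta n r (D1 n N k 1 o Y)) Hc1 ltac:(lia)) as [-> _].
  rewrite colS; auto; try lia. rewrite colE; auto.
  replace (Datatypes.S (L-1)) with L by lia.
  rewrite delta_a; auto; try lia.
  rewrite d1_1_UL, P1, (proj1 (P2 1) (L-1)%nat); try lia.
  z1. ring.
Qed.

Lemma Q2U t : (1 <= t <= L)%nat -> d2 2 Y (U t) (S (L-1)) = 0.
Proof.
  intros Ht. rewrite REC2; auto.
  rewrite (proj1 (pair0 n N k HH1 c1 t (X0 Y) (S (L-1)) _ Hc1 ltac:(lia))).
  rewrite colS, colU; auto; try lia.
  replace (Datatypes.S (L-1)) with L by lia.
  z1. ring.
Qed.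

Lemma Q2S i : (i <= L)%nat -> d2 2 Y (S i) (S (L-1)) = 0.
Proof.
  intros Hi. destruct pfact as [p [Hp1 Hp2]]. rewrite REC2; auto.
  rewrite (pairSS _ _ _ HH1 p); auto. 2:{ apply Hp2; lia. }
  rewrite colS; auto; try lia.
  replace (Datatypes.S (L-1)) with L by lia.
  z1.
  destruct (Nat.eq_dec i L) as [->|Hne'].
  - assert (E := colS_L n N k HH1 c1 (fun i => D2 n N k 1 o Y i (S (L-1))) Hc1).
    rewrite HL1 in E. rewrite E. ring.
  - rewrite colS; auto; try lia. z1. ring.
Qed.

Lemma Q3a t : (1 <= t <= L)%nat ->
  d2 3 Y (S (L-1)) (S (t-1)) = - rt_a k c1 t * (rt_a k c1 L * rt_c k c1 L)
   + rt_a k c1 L * (d2 2 Y (U L) (S (t-1)) - d2 2 Y Y (S (t-1)) - d2 2 Y (S (L-1)) (S (t-1))).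
Proof.
  intros Ht. destruct pfact as [p [Hp1 Hp2]]. rewrite REC2; auto.
  rewrite (pairSS _ _ _ HH1 p); auto; [|apply Hp2; lia].
  rewrite !colS; auto; try lia.
  replace (Datatypes.S (L-1)) with L by lia. replace (Datatypes.S (t-1)) with t by lia.
  rewrite Q2U, Q2P, Q2S; auto; try lia. ring.
Qed.

Lemma Q3bc t : (1 <= t <= L)%nat ->
  d2 3 Y (S (L-1)) (U t) = (rt_b k c1 t + rt_c k c1 t) * (rt_a k c1 L * rt_c k c1 L)
   + rt_a k c1 L * (d2 2 Y (U L) (U t) - d2 2 Y Y (U t) - d2 2 Y (S (L-1)) (U t)).
Proof.
  intros Ht. rewrite REC2; auto.
  rewrite (proj2 (pair0 n N k HH1 c1 t (X0 Y) (S (L-1)) _ Hc1 ltac:(lia))).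
  rewrite colS, colU; auto; try lia.
  replace (Datatypes.S (L-1)) with L by lia.
  rewrite Q2U, Q2P, !Q2S; auto; try lia. ring.
Qed.

Lemma o_S2 : o = S2 0.
Proof. rewrite HS2 by lia. f_equal; lia. Qed.

Lemma ind_o_U2 t : (1 <= t <= L)%nat -> ind (Nat.eqb o (U2 t)) = 0.
Proof. intros Ht. apply ind_neq. intros E. apply (U2_S t L); auto. Qed.
Lemma ind_o_Y2 : ind (Nat.eqb o Y2) = 0.
Proof. apply ind_neq. intros E. apply (Y2_S L); auto. Qed.
Lemma ind_o_S2 i : (1 <= i <= L)%nat -> ind (Nat.eqb o (S2 i)) = 0.
Proof. intros Hi. apply ind_neq. rewrite HS2 by lia. intros E. apply S_inj in E; lia. Qed.

Lemma R1 : d1 1 Y2 (S2 0) = - rt_a k c2 1.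
Proof.
  rewrite REC1; auto. rewrite colS; auto; try lia. rewrite !D1_0.
  rewrite ind_o_U2, ind_o_Y2, <- o_S2, Nat.eqb_refl; try lia. simpl. ring.
Qed.

Lemma R2U m a : (1 <= m <= L)%nat -> d2 1 Y2 (U2 m) a = 0 /\ d2 1 Y2 a (U2 m) = 0.
Proof. intros Hm. rewrite !REC2_1; auto. apply pair0; auto. lia. Qed.

Lemma R2YS : d2 1 Y2 Y2 (S2 0) = - rt_a k c2 1 /\ d2 1 Y2 (S2 0) Y2 = - rt_a k c2 1.
Proof.
  rewrite !REC2_1; auto.
  destruct (pairYS n N k HH1 c2 0 (X0 Y2) (fun r => delta n r (D1 n N k 0 o Y2)) Hc2 ltac:(lia)) as [-> ->].
  rewrite delta_a; auto; try lia. rewrite !D1_0. rewrite ind_o_U2, ind_o_Y2; try lia.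
  replace (1 - 1)%nat with 0%nat by lia. rewrite <- o_S2, Nat.eqb_refl. simpl. split; ring.
Qed.

Lemma R2SS i j : (i <= L)%nat -> (j <= L)%nat -> d2 1 Y2 (S2 i) (S2 j) = 0.
Proof.
  intros Hi Hj. destruct pfact as [p [Hp1 Hp2]].
  rewrite REC2_1; auto. apply (pairSS _ _ _ HH1 p); auto.
  rewrite !HS2 by lia. apply Hp2; lia.
Qed.

Lemma R3a m : (1 <= m <= L)%nat ->
  d2 2 Y2 (S2 0) (S2 (m-1)) = rt_a k c2 m * rt_a k c2 1
   + rt_a k c2 1 * (d2 1 Y2 (U2 1) (S2 (m-1)) - d2 1 Y2 Y2 (S2 (m-1)) - d2 1 Y2 (S2 0) (S2 (m-1))).
Proof.
  intros Hm. destruct pfact as [p [Hp1 Hp2]]. rewrite REC2; auto.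
  rewrite (pairSS _ _ _ HH1 p); auto.
  2:{ rewrite !HS2 by lia. apply Hp2; lia. }
  rewrite !colS; auto; try lia. replace (Datatypes.S (m-1)) with m by lia.
  rewrite (proj1 (R2U m _ Hm)), (proj1 R2YS), R2SS; try lia. ring.
Qed.

Lemma R3bc m : (1 <= m <= L)%nat ->
  d2 2 Y2 (S2 0) (U2 m) = - (rt_b k c2 m + rt_c k c2 m) * rt_a k c2 1
   + rt_a k c2 1 * (d2 1 Y2 (U2 1) (U2 m) - d2 1 Y2 Y2 (U2 m) - d2 1 Y2 (S2 0) (U2 m)).
Proof.
  intros Hm. rewrite REC2; auto.
  rewrite (proj2 (pair0 n N k HH1 c2 m (X0 Y2) (S2 0) _ Hc2 ltac:(lia))).
  rewrite colS, colU; auto; try lia.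
  rewrite (proj1 (R2U m _ Hm)), (proj1 R2YS), !R2SS; try lia. ring.
Qed.

End K.
Lemma solve_lin x1 x2 A B1 B2 : A <> 0 -> x1 * A + B1 = x2 * A + B2 -> B1 = B2 -> x1 = x2.
Proof.
  intros HA H HB. subst. apply (Rmult_eq_reg_r A); auto. lra.
Qed.

Section Ident.
Variables k1 k2 : rates.
Hypothesis Hk1 : positive_rates N k1.
Hypothesis Hk2 : positive_rates N k2.
Let D := Nat.max 2 (2 * L - 1).
Hypothesis Hdat : forall i, In i (o :: nil) -> forall l, (1 <= l <= D)%nat ->
  forall x : nat -> R, peval x (deriv_iter n N k1 l i) = peval x (deriv_iter n N k2 l i).

Lemma dat1 l E j : (l <= D)%nat -> D1 n N k1 l o E j = D1 n N k2 l o E j.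
Proof.
  intros Hl. destruct l. { rewrite !D1_0. reflexivity. }
  unfold D1. apply pderiv_ext. intros x. apply Hdat; [left; auto| lia].
Qed.

Lemma dat2 l E a b : (l <= D)%nat -> D2 n N k1 l o E a b = D2 n N k2 l o E a b.
Proof.
  intros Hl. destruct l. { rewrite !D2_0. reflexivity. }
  unfold D2. apply pderiv_ext. apply pderiv_ext. intros x. apply Hdat; [left; auto| lia].
Qed.

Lemma idc_L : rt_c k1 c1 L = rt_c k2 c1 L.
Proof. rewrite <- (d1_1_UL k1 Hk1), <- (d1_1_UL k2 Hk2). apply dat1. unfold D; lia. Qed.

Lemma ida_L : rt_a k1 c1 L = rt_a k2 c1 L.
Proof.
  assert (H := dat2 2 Y Y (S (L-1)) ltac:(unfold D; lia)).
  rewrite (Q2P k1 Hk1), (Q2P k2 Hk2), <- idc_L in H.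
  destruct (pos1 k1 Hk1 L) as [_ [_ Hc]]; try lia.
  apply (Rmult_eq_reg_r (rt_c k1 c1 L)); auto; lra.
Qed.

Lemma idbc_L : rt_b k1 c1 L + rt_c k1 c1 L = rt_b k2 c1 L + rt_c k2 c1 L.
Proof.
  assert (H := dat1 2 Y (U L) ltac:(unfold D; lia)).
  rewrite (d1_2_UL k1 Hk1), (d1_2_UL k2 Hk2), <- idc_L in H.
  destruct (pos1 k1 Hk1 L) as [_ [_ Hc]]; try lia.
  rewrite <- idc_L. apply (Rmult_eq_reg_r (- rt_c k1 c1 L)); [lra|lra].
Qed.

Lemma ida t : (1 <= t <= L)%nat -> rt_a k1 c1 t = rt_a k2 c1 t.
Proof.
  intros Ht. destruct (Nat.eq_dec t L) as [->|Hne']; [apply ida_L|].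
  assert (H := dat2 3 Y (S (L-1)) (S (t-1)) ltac:(unfold D; lia)).
  rewrite (Q3a k1 Hk1 t Ht), (Q3a k2 Hk2 t Ht), <- ida_L, <- idc_L in H.
  rewrite !(dat2 2) in H by (unfold D; lia).
  destruct (pos1 k1 Hk1 L) as [Ha [_ Hc]]; try lia.
  assert (0 < rt_a k1 c1 L * rt_c k1 c1 L) by (apply Rmult_lt_0_compat; auto).
  apply (Rmult_eq_reg_r (- (rt_a k1 c1 L * rt_c k1 c1 L))); [|lra]. lra.
Qed.

Lemma idbc t : (1 <= t <= L)%nat -> rt_b k1 c1 t + rt_c k1 c1 t = rt_b k2 c1 t + rt_c k2 c1 t.
Proof.
  intros Ht. destruct (Nat.eq_dec t L) as [->|Hne']; [apply idbc_L|].
  assert (H := dat2 3 Y (S (L-1)) (U t) ltac:(unfold D; lia)).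
  rewrite (Q3bc k1 Hk1 t Ht), (Q3bc k2 Hk2 t Ht), <- ida_L, <- idc_L in H.
  rewrite !(dat2 2) in H by (unfold D; lia).
  destruct (pos1 k1 Hk1 L) as [Ha [_ Hc]]; try lia.
  assert (0 < rt_a k1 c1 L * rt_c k1 c1 L) by (apply Rmult_lt_0_compat; auto).
  apply (Rmult_eq_reg_r (rt_a k1 c1 L * rt_c k1 c1 L)); [|lra]. lra.
Qed.

Lemma idc t : (1 <= t <= L)%nat -> rt_c k1 c1 t = rt_c k2 c1 t.
Proof.
  intros Ht.
  assert (H := dat1 (Datatypes.S (2*(L-t))) Y (U t) ltac:(unfold D; lia)).
  rewrite (Ucol k1 Hk1), (Ucol k2 Hk2) in H; try lia.
  rewrite !(dat1 (2*(L-t))) in H by (unfold D; lia).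
  pose proof (P3 k2 Hk2 (L-t)%nat ltac:(lia)) as HP. replace (L - (L-t))%nat with t in HP by lia.
  pose proof (idbc t Ht) as Hbc.
  apply (Rmult_eq_reg_r (D1 n N k2 (2 * (L - t)) o Y (S t))); [|lra].
  set (v := D1 n N k2 (2 * (L - t)) o Y) in *.
  assert (E1 : rt_b k1 c1 t = rt_b k2 c1 t + rt_c k2 c1 t - rt_c k1 c1 t) by lra.
  rewrite E1 in H. nra.
Qed.

Lemma idb t : (1 <= t <= L)%nat -> rt_b k1 c1 t = rt_b k2 c1 t.
Proof. intros Ht. pose proof (idbc t Ht). pose proof (idc t Ht). lra. Qed.

Lemma ida2_1 : rt_a k1 c2 1 = rt_a k2 c2 1.
Proof.
  assert (H := dat1 1 Y2 (S2 0) ltac:(unfold D; lia)).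
  rewrite (R1 k1 Hk1), (R1 k2 Hk2) in H. lra.
Qed.

Lemma ida2 m : (1 <= m <= L)%nat -> rt_a k1 c2 m = rt_a k2 c2 m.
Proof.
  intros Hm. assert (H := dat2 2 Y2 (S2 0) (S2 (m-1)) ltac:(unfold D; lia)).
  rewrite (R3a k1 Hk1 m Hm), (R3a k2 Hk2 m Hm), <- ida2_1 in H.
  rewrite !(dat2 1) in H by (unfold D; lia).
  destruct (pos2 k1 Hk1 1) as [Ha _]; try lia.
  apply (Rmult_eq_reg_r (rt_a k1 c2 1)); lra.
Qed.

Lemma idbc2 m : (1 <= m <= L)%nat -> rt_b k1 c2 m + rt_c k1 c2 m = rt_b k2 c2 m + rt_c k2 c2 m.
Proof.
  intros Hm. assert (H := dat2 2 Y2 (S2 0) (U2 m) ltac:(unfold D; lia)).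
  rewrite (R3bc k1 Hk1 m Hm), (R3bc k2 Hk2 m Hm), <- ida2_1 in H.
  rewrite !(dat2 1) in H by (unfold D; lia).
  destruct (pos2 k1 Hk1 1) as [Ha _]; try lia.
  apply (Rmult_eq_reg_r (- rt_a k1 c2 1)); lra.
Qed.

Lemma idb2 m : (1 <= m <= L)%nat -> rt_b k1 c2 m = rt_b k2 c2 m.
Proof.
  intros Hm.
  assert (H := dat1 (Datatypes.S (2*(m-1))) Y (U2 m) ltac:(unfold D; lia)).
  rewrite (c2col k1 Hk1), (c2col k2 Hk2) in H; try lia.
  rewrite !(dat1 (2*(m-1))) in H by (unfold D; lia).
  pose proof (P3 k2 Hk2 (m-1)%nat ltac:(lia)) as HP.
  pose proof (idbc2 m Hm) as Hbc.
  apply (Rmult_eq_reg_r (D1 n N k2 (2 * (m-1)) o Y (S (L - (m-1))))); [|lra].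
  set (v := D1 n N k2 (2 * (m-1)) o Y) in *.
  assert (E1 : rt_c k1 c2 m = rt_b k2 c2 m + rt_c k2 c2 m - rt_b k1 c2 m) by lra.
  rewrite E1 in H. nra.
Qed.

Lemma idc2 m : (1 <= m <= L)%nat -> rt_c k1 c2 m = rt_c k2 c2 m.
Proof. intros Hm. pose proof (idbc2 m Hm). pose proof (idb2 m Hm). lra. Qed.

End Ident.
End Main.

Theorem mainTheorem3 :
  forall (n : nat) (N : list chain) (c1 c2 L : nat),
    H1 n N -> H2 n N ->
    (c1 < length N)%nat -> (c2 < length N)%nat -> c1 <> c2 ->
    (1 <= L)%nat ->
    ch_L (chain_at N c1) = L ->
    ch_L (chain_at N c2) = L ->
    (forall i, (i <= L)%nat -> ch_S (chain_at N c2) i = ch_S (chain_at N c1) (L - i)) ->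
    identifiable n N (two_chain_constants c1 c2 L)
      (ch_S (chain_at N c1) L :: nil) (Nat.max 2 (2 * L - 1)).
Proof.
  intros n N c1 c2 L HH1 HH2 Hc1 Hc2 Hne HL HL1 HL2 HS2 k1 k2 Hk1 Hk2 Hdat.
  unfold two_chain_constants. apply map_ext_in. intros j Hj. apply in_seq in Hj.
  assert (Hj' : (1 <= j <= L)%nat) by lia.
  rewrite (ida n N c1 c2 L HH1 HH2 Hc1 Hc2 Hne HL HL1 HL2 HS2 k1 k2 Hk1 Hk2 Hdat j Hj'),
    (idb n N c1 c2 L HH1 HH2 Hc1 Hc2 Hne HL HL1 HL2 HS2 k1 k2 Hk1 Hk2 Hdat j Hj'),
    (idc n N c1 c2 L HH1 HH2 Hc1 Hc2 Hne HL HL1 HL2 HS2 k1 k2 Hk1 Hk2 Hdat j Hj'),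
    (ida2 n N c1 c2 L HH1 HH2 Hc1 Hc2 Hne HL HL1 HL2 HS2 k1 k2 Hk1 Hk2 Hdat j Hj'),
    (idb2 n N c1 c2 L HH1 HH2 Hc1 Hc2 Hne HL HL1 HL2 HS2 k1 k2 Hk1 Hk2 Hdat j Hj'),
    (idc2 n N c1 c2 L HH1 HH2 Hc1 Hc2 Hne HL HL1 HL2 HS2 k1 k2 Hk1 Hk2 Hdat j Hj').
  reflexivity.
Qed.
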